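(* Let $K$ be a field, $Q$ a type $A$ quiver of arbitrary orientation, $\mathbf{d}$ a dimension vector for $Q$, and let $\tilde Q$, $\tilde{\mathbf{d}}$, $G^*$, $U$ and $\pi\colon U\to\mathrm{rep}_Q(\mathbf{d})$ be as described below. Then $\pi$ induces a bijection between the $\mathbf{GL}(\tilde{\mathbf{d}})$-orbits in $U$ and the $\mathbf{GL}(\mathbf{d})$-orbits in $\mathrm{rep}_Q(\mathbf{d})$ (namely $\mathcal{O}\mapsto \pi^{-1}(\mathcal{O})$ is inverse to $\mathcal{O}'\mapsto\pi(\mathcal{O}')$), and likewise a bijection between orbit closures in $U$ and orbit closures in $\mathrm{rep}_Q(\mathbf{d})$. Moreover, for each orbit $\mathcal{O}\subseteq\mathrm{rep}_Q(\mathbf{d})$, the closure of $\pi^{-1}(\mathcal{O})$ in $U$ is isomorphic to $G^*\times\overline{\mathcal{O}}$.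
   Context: Label the vertices of $Q$ along the line as $z_0,\dots,z_n$ and the arrows as $\gamma_1,\dots,\gamma_n$, with $\gamma_i$ joining $z_{i-1}$ and $z_i$ (in either direction). $\mathrm{rep}_Q(\mathbf{d})=\prod_{a}\mathrm{Mat}_{\mathbf{d}(ha)\times\mathbf{d}(ta)}(K)$ with $\mathbf{GL}(\mathbf{d})=\prod_v\mathbf{GL}_{\mathbf{d}(v)}(K)$ acting by $g\cdot V=(g_{ha}V_ag_{ta}^{-1})_a$. The quiver $\tilde Q$ is obtained from $Q$ as follows: for each $i$ with $z_{i-1}\xrightarrow{\gamma_i}z_i\xrightarrow{\gamma_{i+1}}z_{i+1}$, add a new vertex $w_i$ and arrow $\delta_i$ and replace $\gamma_i$ by $\gamma_i\colon z_{i-1}\to w_i$, with $\delta_i\colon z_i\to w_i$ (a new sink); for each $i$ with $z_{i-1}\xleftarrow{\gamma_i}z_i\xleftarrow{\gamma_{i+1}}z_{i+1}$, add a new vertex $w_i$ and arrow $\delta_i$ and replace $\gamma_i$ by $\gamma_i\colon w_i\to z_{i-1}$, with $\delta_i\colon w_i\to z_i$ (a new source). All other arrows are kept; $\tilde Q$ is a bipartite type $A$ quiver. Set $\tilde{\mathbf{d}}(z_i)=\mathbf{d}(z_i)$, $\tilde{\mathbf{d}}(w_i)=\mathbf{d}(z_i)$, and $G^*=\prod_i\mathbf{GL}_{\tilde{\mathbf{d}}(w_i)}(K)$, so $\mathbf{GL}(\tilde{\mathbf{d}})=G^*\times\mathbf{GL}(\mathbf{d})$. Let $U\subseteq\mathrm{rep}_{\tilde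 Q}(\tilde{\mathbf{d}})$ be the open set of $\tilde V$ with every $V_{\delta_i}$ invertible, and define $\pi(\tilde V)=(X_{\gamma_i})_i$ where $X_{\gamma_i}=V_{\gamma_i}$ if no $w_i$ was inserted, $X_{\gamma_i}=V_{\delta_i}^{-1}V_{\gamma_i}$ in the new-sink case, and $X_{\gamma_i}=V_{\gamma_i}V_{\delta_i}^{-1}$ in the new-source case. *)

(* Defs.v *)
From HB Require Import structures.
From mathcomp Require Import all_boot all_order all_algebra.
Set Implicit Arguments. Unset Strict Implicit. Unset Printing Implicit Defensive.
Import GRing.Theory.
Local Open Scope ring_scope.

Definition seteq {T : Type} (A B : T -> Prop) : Prop := forall x, A x <-> B x.

Inductive polyfun (K : fieldType) (T I : Type) (coord : I -> T -> K) :
  (T -> K) -> Prop :=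
| pf_const (c : K) : polyfun coord (fun _ => c)
| pf_coord (i : I) : polyfun coord (coord i)
| pf_add f g : polyfun coord f -> polyfun coord g -> polyfun coord (fun x => f x + g x)
| pf_mul f g : polyfun coord f -> polyfun coord g -> polyfun coord (fun x => f x * g x).

Definition zclosure (K : fieldType) (T I : Type) (coord : I -> T -> K)
  (S : T -> Prop) : T -> Prop :=
  fun x => forall f, polyfun coord f -> (forall y, S y -> f y = 0) -> f x = 0.

Definition regular_on (K : fieldType) (T1 I1 T2 I2 : Type)
  (c1 : I1 -> T1 -> K) (c2 : I2 -> T2 -> K) (A : T1 -> Prop) (f : T1 -> T2) :=
  forall x, A x -> forall i : I2, exists p q : T1 -> K,
    [/\ polyfun c1 p, polyfun c1 q, q x != 0 &
        forall y, A y -> q y != 0 -> c2 i (f y) * q y = p y].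

Definition var_iso (K : fieldType) (T1 I1 T2 I2 : Type)
  (c1 : I1 -> T1 -> K) (c2 : I2 -> T2 -> K) (A : T1 -> Prop) (B : T2 -> Prop) :=
  exists (f : T1 -> T2) (g : T2 -> T1),
    [/\ (forall x, A x -> B (f x)), (forall y, B y -> A (g y)),
        (forall x, A x -> g (f x) = x), (forall y, B y -> f (g y) = y) &
        (regular_on c1 c2 A f /\ regular_on c2 c1 B g)].

(* Type A quiver Q: vertices z_0..z_n ('I_n.+1), arrows gamma_1..gamma_n *)
(* (0-based index j : 'I_n for gamma_(j+1)), joining lv j = z_j and     *)
(* rv j = z_(j+1).  o j = true  means gamma_(j+1) : z_j -> z_(j+1),     *)
(*                   o j = false means gamma_(j+1) : z_(j+1) -> z_j.    *)

Definition lv {n} (j : 'I_n) : 'I_n.+1 := widen_ord (leqnSn n) j.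
Definition rv {n} (j : 'I_n) : 'I_n.+1 := lift ord0 j.
Definition hdA {n} (o : 'I_n -> bool) (j : 'I_n) : 'I_n.+1 :=
  if o j then rv j else lv j.
Definition tlA {n} (o : 'I_n -> bool) (j : 'I_n) : 'I_n.+1 :=
  if o j then lv j else rv j.

Definition repA (K : fieldType) {n} (o : 'I_n -> bool) (d : 'I_n.+1 -> nat) :=
  forall j : 'I_n, 'M[K]_(d (hdA o j), d (tlA o j)).

Definition glA (K : fieldType) {n} (d : 'I_n.+1 -> nat) :=
  forall v : 'I_n.+1, 'M[K]_(d v).
Definition isGL {K : fieldType} {n} {d : 'I_n.+1 -> nat} (g : glA K d) :=
  forall v, g v \in unitmx.

Definition actA {K : fieldType} {n} {o : 'I_n -> bool} {d : 'I_n.+1 -> nat}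
  (g : glA K d) (V : repA K o d) : repA K o d :=
  fun j => g (hdA o j) *m V j *m invmx (g (tlA o j)).

Definition orbitA {K : fieldType} {n} {o : 'I_n -> bool} {d : 'I_n.+1 -> nat}
  (V : repA K o d) : repA K o d -> Prop :=
  fun W => exists g : glA K d, isGL g /\ W = actA g V.

Definition idxA {n} (o : 'I_n -> bool) (d : 'I_n.+1 -> nat) :=
  {j : 'I_n & ('I_(d (hdA o j)) * 'I_(d (tlA o j)))%type}.
Definition coordA {K : fieldType} {n} {o : 'I_n -> bool} {d : 'I_n.+1 -> nat}
  (x : idxA o d) (V : repA K o d) : K :=
  V (tag x) (tagged x).1 (tagged x).2.

(* The quiver Q~.  A vertex w_(j+1) is inserted for arrow gamma_(j+1)  *)
(* iff gamma_(j+2) exists and has the same orientation as gamma_(j+1)  *)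
(* (new sink if o j = true, new source if o j = false).                *)

Definition modified {n} (o : 'I_n -> bool) (j : 'I_n) : bool :=
  [exists k : 'I_n, (val k == j.+1) && (o k == o j)].

(* d~(w_(j+1)) = d(z_(j+1)) when w_(j+1) exists; we use size 0 (a trivial
   one-point matrix space) for indices j where no w is inserted, so that
   (forall j, 'M_(dw j)) is exactly prod_{w inserted} Mat_{d~(w)}.        *)
Definition dw {n} (o : 'I_n -> bool) (d : 'I_n.+1 -> nat) (j : 'I_n) : nat :=
  if modified o j then d (rv j) else 0%N.

Definition wmats (K : fieldType) {n} (o : 'I_n -> bool) (d : 'I_n.+1 -> nat) :=
  forall j : 'I_n, 'M[K]_(dw o d j).

(* rep_Q~(d~): the matrices of the arrows gamma_j of Q~ (whose sizes
   d~(h gamma) x d~(t gamma) coincide with those in Q) and of the new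
   arrows delta_j (square of size d(z_j)). *)
Definition repT (K : fieldType) {n} (o : 'I_n -> bool) (d : 'I_n.+1 -> nat) :=
  (repA K o d * wmats K o d)%type.

(* GL(d~) = GL(d) x G^*,  with G^* = prod_{w} GL_{d~(w)} *)
Definition glT (K : fieldType) {n} (o : 'I_n -> bool) (d : 'I_n.+1 -> nat) :=
  (glA K d * wmats K o d)%type.
Definition isGstar {K : fieldType} {n} {o : 'I_n -> bool} {d : 'I_n.+1 -> nat}
  (h : wmats K o d) := forall j, h j \in unitmx.
Definition isGLT {K : fieldType} {n} {o : 'I_n -> bool} {d : 'I_n.+1 -> nat}
  (gh : glT K o d) := isGL gh.1 /\ isGstar gh.2.

Definition actG {K : fieldType} {n} {o : 'I_n -> bool} {d : 'I_n.+1 -> nat}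
  (g : glA K d) (j : 'I_n) :
  'M[K]_(dw o d j) -> 'M[K]_(d (hdA o j), d (tlA o j)) ->
  'M[K]_(d (hdA o j), d (tlA o j)) :=
  match modified o j as m return
    'M[K]_(if m then d (rv j) else 0%N) -> 'M[K]_(d (hdA o j), d (tlA o j)) ->
    'M[K]_(d (hdA o j), d (tlA o j)) with
  | true => fun h V =>
     (match o j as b return
        'M[K]_(d (if b then rv j else lv j), d (if b then lv j else rv j)) ->
        'M[K]_(d (if b then rv j else lv j), d (if b then lv j else rv j)) with
      | true => fun V => h *m V *m invmx (g (lv j))   (* z_j -> w *)
      | false => fun V => g (lv j) *m V *m invmx h    (* w -> z_j *)
      end) V
  | false => fun _ V => g (hdA o j) *m V *m invmx (g (tlA o j))
  end.

Arguments actG {K n o d} g j _ _.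

Definition actD {K : fieldType} {n} {o : 'I_n -> bool} {d : 'I_n.+1 -> nat}
  (g : glA K d) (j : 'I_n) : 'M[K]_(dw o d j) -> 'M[K]_(dw o d j) -> 'M[K]_(dw o d j) :=
  match modified o j as m return
    'M[K]_(if m then d (rv j) else 0%N) -> 'M[K]_(if m then d (rv j) else 0%N) ->
    'M[K]_(if m then d (rv j) else 0%N) with
  | true => fun h D =>
      if o j then h *m D *m invmx (g (rv j))        (* delta : z_(j+1) -> w *)
      else g (rv j) *m D *m invmx h                 (* delta : w -> z_(j+1) *)
  | false => fun _ D => D
  end.

Arguments actD {K n o d} g j _ _.

Definition actT {K : fieldType} {n} {o : 'I_n -> bool} {d : 'I_n.+1 -> nat}
  (gh : glT K o d) (Vt : repT K o d) : repT K o d :=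
  (fun j => actG gh.1 j (gh.2 j) (Vt.1 j), fun j => actD gh.1 j (gh.2 j) (Vt.2 j)).

Definition orbitT {K : fieldType} {n} {o : 'I_n -> bool} {d : 'I_n.+1 -> nat}
  (Vt : repT K o d) : repT K o d -> Prop :=
  fun Wt => exists gh : glT K o d, isGLT gh /\ Wt = actT gh Vt.

Definition inU {K : fieldType} {n} {o : 'I_n -> bool} {d : 'I_n.+1 -> nat}
  (Vt : repT K o d) : Prop := forall j, Vt.2 j \in unitmx.

Definition piA {K : fieldType} {n} {o : 'I_n -> bool} {d : 'I_n.+1 -> nat}
  (j : 'I_n) : 'M[K]_(dw o d j) -> 'M[K]_(d (hdA o j), d (tlA o j)) ->
  'M[K]_(d (hdA o j), d (tlA o j)) :=
  match modified o j as m return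
    'M[K]_(if m then d (rv j) else 0%N) -> 'M[K]_(d (hdA o j), d (tlA o j)) ->
    'M[K]_(d (hdA o j), d (tlA o j)) with
  | true => fun D V =>
     (match o j as b return
        'M[K]_(d (if b then rv j else lv j), d (if b then lv j else rv j)) ->
        'M[K]_(d (if b then rv j else lv j), d (if b then lv j else rv j)) with
      | true => fun V => invmx D *m V      (* new sink:   V_delta^-1 V_gamma *)
      | false => fun V => V *m invmx D     (* new source: V_gamma V_delta^-1 *)
      end) V
  | false => fun _ V => V
  end.

Arguments piA {K n o d} j _ _.

Definition piT {K : fieldType} {n} {o : 'I_n -> bool} {d : 'I_n.+1 -> nat}
  (Vt : repT K o d) : repA K o d := fun j => piA j (Vt.2 j) (Vt.1 j).

Definition idxW {n} (o : 'I_n -> bool) (d : 'I_n.+1 -> nat) :=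
  {j : 'I_n & ('I_(dw o d j) * 'I_(dw o d j))%type}.
Definition coordW {K : fieldType} {n} {o : 'I_n -> bool} {d : 'I_n.+1 -> nat}
  (x : idxW o d) (D : wmats K o d) : K :=
  D (tag x) (tagged x).1 (tagged x).2.
Definition coordT {K : fieldType} {n} {o : 'I_n -> bool} {d : 'I_n.+1 -> nat}
  (x : idxA o d + idxW o d) (Vt : repT K o d) : K :=
  match x with inl a => coordA a Vt.1 | inr b => coordW b Vt.2 end.
Definition coordP {K : fieldType} {n} {o : 'I_n -> bool} {d : 'I_n.+1 -> nat}
  (x : idxW o d + idxA o d) (p : (wmats K o d * repA K o d)%type) : K :=
  match x with inl b => coordW b p.1 | inr a => coordA a p.2 end.

Definition preU {K : fieldType} {n} {o : 'I_n -> bool} {d : 'I_n.+1 -> nat}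
  (S : repA K o d -> Prop) : repT K o d -> Prop := fun Vt => inU Vt /\ S (piT Vt).
Definition imgpi {K : fieldType} {n} {o : 'I_n -> bool} {d : 'I_n.+1 -> nat}
  (S : repT K o d -> Prop) : repA K o d -> Prop :=
  fun X => exists Vt, S Vt /\ piT Vt = X.
Definition clA {K : fieldType} {n} {o : 'I_n -> bool} {d : 'I_n.+1 -> nat}
  (S : repA K o d -> Prop) : repA K o d -> Prop := zclosure coordA S.
(* closure in U (subspace topology) *)
Definition clU {K : fieldType} {n} {o : 'I_n -> bool} {d : 'I_n.+1 -> nat}
  (S : repT K o d -> Prop) : repT K o d -> Prop :=
  fun Vt => inU Vt /\ zclosure coordT S Vt.
Definition GstarX {K : fieldType} {n} {o : 'I_n -> bool} {d : 'I_n.+1 -> nat}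
  (C : repA K o d -> Prop) : (wmats K o d * repA K o d)%type -> Prop :=
  fun p => isGstar p.1 /\ C p.2.

(* Main.v *)
Require Import Defs.
From HB Require Import structures.
From mathcomp Require Import all_boot all_order all_algebra all_fingroup.
From mathcomp Require Import ring.
From Stdlib Require Import IndefiniteDescription.
From Stdlib Require Import FunctionalExtensionality.
Set Implicit Arguments. Unset Strict Implicit. Unset Printing Implicit Defensive.
Import GRing.Theory.
Local Open Scope ring_scope.

Section Gen.
Variables (K : fieldType) (T I : Type) (c : I -> T -> K).

Lemma pf_ext f g : polyfun c f -> (forall x, f x = g x) -> polyfun c g.
Proof. by move=> Pf E; have -> : g = f by apply: functional_extensionality => x; rewrite E. Qed.

Lemma pf_sum (J : Type) (r : seq J) (P : pred J) (F : J -> T -> K) :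
  (forall i, polyfun c (F i)) -> polyfun c (fun x => \sum_(i <- r | P i) F i x).
Proof.
move=> HF; elim: r => [|i r IH].
  by apply: (pf_ext (pf_const c 0)) => x; rewrite big_nil.
case Pi: (P i).
  by apply: (pf_ext (pf_add (HF i) IH)) => x; rewrite big_cons Pi.
by apply: (pf_ext IH) => x; rewrite big_cons Pi.
Qed.

Lemma pf_prod (J : Type) (r : seq J) (P : pred J) (F : J -> T -> K) :
  (forall i, polyfun c (F i)) -> polyfun c (fun x => \prod_(i <- r | P i) F i x).
Proof.
move=> HF; elim: r => [|i r IH].
  by apply: (pf_ext (pf_const c 1)) => x; rewrite big_nil.
case Pi: (P i).
  by apply: (pf_ext (pf_mul (HF i) IH)) => x; rewrite big_cons Pi.
by apply: (pf_ext IH) => x; rewrite big_cons Pi.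
Qed.

Lemma pf_exp f N : polyfun c f -> polyfun c (fun x => f x ^+ N).
Proof.
move=> Pf; elim: N => [|N IH].
  by apply: (pf_ext (pf_const c 1)) => x; rewrite expr0.
by apply: (pf_ext (pf_mul Pf IH)) => x; rewrite exprS.
Qed.

Definition polyM p q (M : T -> 'M[K]_(p, q)) := forall a b, polyfun c (fun x => M x a b).

Lemma pM_const p q (A : 'M[K]_(p, q)) : polyM (fun _ => A).
Proof. by move=> a b; apply: pf_const. Qed.

Lemma pM_mul p q r (A : T -> 'M[K]_(p, q)) (B : T -> 'M[K]_(q, r)) :
  polyM A -> polyM B -> polyM (fun x => A x *m B x).
Proof.
move=> PA PB a b; apply: (pf_ext (pf_sum (index_enum _) xpredT
   (F := fun k x => A x a k * B x k b) _)) => [k|x]; first exact: pf_mul.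
by rewrite mxE.
Qed.

Lemma pf_det p (A : T -> 'M[K]_p) : polyM A -> polyfun c (fun x => \det (A x)).
Proof.
move=> PA; apply: (pf_ext (pf_sum (index_enum _) xpredT
   (F := fun s x => (-1) ^+ (s : 'S_p) * \prod_i A x i (s i)) _)) => [s|x //].
apply: pf_mul; first exact: pf_const.
by apply: pf_prod => i; apply: PA.
Qed.

Lemma pM_adj p (A : T -> 'M[K]_p) : polyM A -> polyM (fun x => \adj (A x)).
Proof.
move=> PA a b.
have PB : polyM (fun x => row' b (col' a (A x))).
  by move=> i j; apply: (pf_ext (PA _ _)) => x; rewrite !mxE.
apply: (pf_ext (pf_mul (pf_const c ((-1) ^+ (b + a))) (pf_det PB))) => x.
by rewrite mxE.
Qed.

End Gen.

Lemma invmxM (K : fieldType) p (A B : 'M[K]_p) : A \in unitmx -> B \in unitmx ->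
  invmx (A *m B) = invmx B *m invmx A.
Proof.
move=> uA uB; have uAB : A *m B \in unitmx by rewrite unitmx_mul uA.
apply: (can_inj (mulKmx uAB)).
by rewrite mulmxV // mulmxA -(mulmxA A) mulmxV // mulmx1 mulmxV.
Qed.

Definition unpi {K : fieldType} {n} {o : 'I_n -> bool} {d : 'I_n.+1 -> nat}
  (j : 'I_n) : 'M[K]_(dw o d j) -> 'M[K]_(d (hdA o j), d (tlA o j)) ->
  'M[K]_(d (hdA o j), d (tlA o j)) :=
  match modified o j as m return
    'M[K]_(if m then d (rv j) else 0%N) -> 'M[K]_(d (hdA o j), d (tlA o j)) ->
    'M[K]_(d (hdA o j), d (tlA o j)) with
  | true => fun D V =>
     (match o j as b return
        'M[K]_(d (if b then rv j else lv j), d (if b then lv j else rv j)) ->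
        'M[K]_(d (if b then rv j else lv j), d (if b then lv j else rv j)) with
      | true => fun V => D *m V
      | false => fun V => V *m D
      end) V
  | false => fun _ V => V
  end.
Arguments unpi {K n o d} j _ _.

Section PerJ.
Variables (K : fieldType) (n : nat) (o : 'I_n -> bool) (d : 'I_n.+1 -> nat).

Lemma pi_unpi j (D : 'M[K]_(dw o d j)) X : D \in unitmx -> piA j D (unpi j D X) = X.
Proof.
move: D X; rewrite /dw /piA /unpi /hdA /tlA; case: (modified o j) => D X uD //.
by move: X; case: (o j) => X; [rewrite mulKmx | rewrite mulmxK].
Qed.

Lemma unpi_pi j (D : 'M[K]_(dw o d j)) X : D \in unitmx -> unpi j D (piA j D X) = X.
Proof.
move: D X; rewrite /dw /piA /unpi /hdA /tlA; case: (modified o j) => D X uD //.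
by move: X; case: (o j) => X; [rewrite mulKVmx | rewrite mulmxKV].
Qed.

Lemma actD_unit j (g : glA K d) (h D : 'M[K]_(dw o d j)) :
  isGL g -> h \in unitmx -> D \in unitmx -> actD g j h D \in unitmx.
Proof.
move: h D; rewrite /dw /actD; case: (modified o j) => h D uG uh uD //.
by case: (o j); rewrite !unitmx_mul ?unitmx_inv ?uh ?uD ?uG.
Qed.

Lemma pi_act j (g : glA K d) (h D : 'M[K]_(dw o d j)) V :
  isGL g -> h \in unitmx -> D \in unitmx ->
  piA j (actD g j h D) (actG g j h V) = g (hdA o j) *m piA j D V *m invmx (g (tlA o j)).
Proof.
move: h D V; rewrite /dw /actD /actG /piA /hdA /tlA.
case: (modified o j) => h D V uG uh uD //.
move: V; case: (o j) => V.
  rewrite !invmxM ?invmxK ?unitmx_mul ?unitmx_inv ?uh ?uD ?uG //.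
  by rewrite !mulmxA mulmxKV // mulmxKV.
rewrite !invmxM ?invmxK ?unitmx_mul ?unitmx_inv ?uh ?uD ?uG //.
by rewrite !mulmxA mulmxKV // -!mulmxA mulKmx.
Qed.

End PerJ.

Section PerJ2.
Variables (K : fieldType) (n : nat) (o : 'I_n -> bool) (d : 'I_n.+1 -> nat).

Lemma fiber j (g : glA K d) (D1 D2 : 'M[K]_(dw o d j)) V1 V2 :
  isGL g -> D1 \in unitmx -> D2 \in unitmx ->
  piA j D2 V2 = g (hdA o j) *m piA j D1 V1 *m invmx (g (tlA o j)) ->
  exists2 h, h \in unitmx & (actD g j h D1 = D2 /\ actG g j h V1 = V2).
Proof.
move: D1 D2 V1 V2; rewrite /dw /actD /actG /piA /hdA /tlA.
case: (modified o j) => D1 D2 V1 V2 uG u1 u2.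
  move: V1 V2; case: (o j) => V1 V2 E.
    exists (D2 *m g (rv j) *m invmx D1); first by rewrite !unitmx_mul unitmx_inv u1 u2 uG.
    split; first by rewrite mulmxKV // mulmxK.
    by rewrite -[RHS](mulKVmx u2) E !mulmxA.
  exists (invmx D2 *m g (rv j) *m D1); first by rewrite !unitmx_mul unitmx_inv u1 u2 uG.
  rewrite !invmxM ?invmxK ?unitmx_mul ?unitmx_inv ?u1 ?u2 ?uG //.
  split.
    by rewrite !mulmxA (mulmxK u1) mulmxV // mul1mx.
  by rewrite -[RHS](mulmxKV u2) E !mulmxA.
move=> E; exists D1 => //; split => //.
by rewrite (flatmx0 D1) (flatmx0 D2).
Qed.

Section G.
Variables (T I : Type) (c : I -> T -> K).

Lemma det_pi_poly j (DD : T -> 'M[K]_(dw o d j)) VV :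
  polyM c DD -> polyM c VV -> exists M, polyM c M /\
  forall x, DD x \in unitmx -> \det (DD x) *: piA j (DD x) (VV x) = M x.
Proof.
move: DD VV; rewrite /dw /piA /hdA /tlA.
case: (modified o j) => DD VV PD PV.
  move: VV PV; case: (o j) => VV PV.
    exists (fun x => \adj (DD x) *m VV x); split; first by apply: pM_mul => //; exact: pM_adj.
    move=> x uD; rewrite /invmx uD -scalemxAl scalerA mulrV ?scale1r //.
  exists (fun x => VV x *m \adj (DD x)); split; first by apply: pM_mul => //; exact: pM_adj.
  move=> x uD; rewrite /invmx uD -scalemxAr scalerA mulrV ?scale1r //.
exists VV; split => // x _; by rewrite det_mx00 scale1r.
Qed.

Lemma unpi_poly j (DD : T -> 'M[K]_(dw o d j)) VV :
  polyM c DD -> polyM c VV -> polyM c (fun x => unpi j (DD x) (VV x)).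
Proof.
move: DD VV; rewrite /dw /unpi /hdA /tlA.
case: (modified o j) => DD VV PD PV //.
by move: VV PV; case: (o j) => VV PV; apply: pM_mul.
Qed.

End G.
End PerJ2.

Section Glob.
Variables (K : fieldType) (n : nat) (o : 'I_n -> bool) (d : 'I_n.+1 -> nat).
Local Notation repT := (repT K o d).
Local Notation repA := (repA K o d).

Definition PsiT (p : (wmats K o d * repA)%type) : repT :=
  (fun j => unpi j (p.1 j) (p.2 j), p.1).

Definition cW (Vt : repT) : K := \prod_(k : 'I_n) \det (Vt.2 k).

Lemma piT_PsiT (D : wmats K o d) X : isGstar D -> piT (PsiT (D, X)) = X.
Proof. by move=> uD; apply: functional_extensionality_dep => j; apply: pi_unpi. Qed.

Lemma PsiT_Phi (Vt : repT) : inU Vt -> PsiT (Vt.2, piT Vt) = Vt.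
Proof.
case: Vt => V D uD; rewrite /PsiT /=; congr pair.
by apply: functional_extensionality_dep => j; apply: unpi_pi; apply: uD.
Qed.

Lemma actT_inU (gh : glT K o d) Vt : isGLT gh -> inU Vt -> inU (actT gh Vt).
Proof. by case=> uG uH uV j; apply: actD_unit. Qed.

Lemma piT_actT (gh : glT K o d) Vt : isGLT gh -> inU Vt ->
  piT (actT gh Vt) = actA gh.1 (piT Vt).
Proof.
case=> uG uH uV; apply: functional_extensionality_dep => j.
exact: pi_act.
Qed.

Lemma ORB (Vt : repT) : inU Vt -> seteq (orbitT Vt) (preU (orbitA (piT Vt))).
Proof.
move=> uV W; split.
  case=> gh [gG ->]; split; first exact: actT_inU.
  by exists gh.1; split; [case: gG | rewrite piT_actT].
case=> uW [g [uG E]].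
have H j : exists h, h \in unitmx /\
    (actD g j h (Vt.2 j) = W.2 j /\ actG g j h (Vt.1 j) = W.1 j).
  have [||||h uh Hh] := @fiber K n o d j g (Vt.2 j) (W.2 j) (Vt.1 j) (W.1 j) => //.
    by have := congr1 (fun f => f j) E.
  by exists h.
pose hh j := proj1_sig (constructive_indefinite_description _ (H j)).
have Hh j : hh j \in unitmx /\ (actD g j (hh j) (Vt.2 j) = W.2 j /\ actG g j (hh j) (Vt.1 j) = W.1 j).
  exact: (proj2_sig (constructive_indefinite_description _ (H j))).
exists (g, hh); split; first by split => // j; case: (Hh j).
clearbody hh; case: W Hh {E uW H} => V D Hh; rewrite /actT /=; congr pair;
  apply: functional_extensionality_dep => j /=; case: (Hh j) => _ [] //.
Qed.


Lemma pM_W j : polyM (@coordT K n o d) (fun W : repT => W.2 j).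
Proof. by move=> a b; apply: (pf_ext (pf_coord _ (inr (existT _ j (a, b))))). Qed.

Lemma pM_V j : polyM (@coordT K n o d) (fun W : repT => W.1 j).
Proof. by move=> a b; apply: (pf_ext (pf_coord _ (inl (existT _ j (a, b))))). Qed.

Lemma cW_poly : polyfun (@coordT K n o d) cW.
Proof.
apply: (pf_ext (pf_prod (index_enum _) xpredT (F := fun k W => \det (W.2 k)) _)) => // k.
apply: pf_det; exact: pM_W.
Qed.

Lemma cW_neq0 W : inU W -> cW W != 0.
Proof. by move=> uW; apply/prodf_neq0 => k _; rewrite -unitfE; apply: uW. Qed.

Lemma coord_pull (a : idxA o d) : exists F, polyfun (@coordT K n o d) F /\
  forall W, inU W -> coordA a (piT W) * cW W = F W.
Proof.
case: a => j [r s].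
have [M [PM HM]] := det_pi_poly (pM_W (j:=j)) (pM_V (j:=j)).
exists (fun W => M W r s * \prod_(k | k != j) \det (W.2 k)); split.
  apply: pf_mul; first exact: PM.
  by apply: pf_prod => k; apply: pf_det; exact: pM_W.
move=> W uW; rewrite /cW (bigD1 j) //= mulrA -HM ?mxE; last exact: uW.
by rewrite /coordA /= [_ * \det _]mulrC.
Qed.

Lemma PULL f : polyfun (@coordA K n o d) f -> exists F N, polyfun (@coordT K n o d) F /\
  forall W, inU W -> F W = f (piT W) * cW W ^+ N.
Proof.
elim=> [k|a|f1 f2 _ [F1 [N1 [P1 H1]]] _ [F2 [N2 [P2 H2]]]
          |f1 f2 _ [F1 [N1 [P1 H1]]] _ [F2 [N2 [P2 H2]]]].
- by exists (fun _ => k), 0%N; split; [exact: pf_const | move=> W _; rewrite mulr1].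
- have [F [PF HF]] := coord_pull a.
  by exists F, 1%N; split => // W uW; rewrite expr1 HF.
- exists (fun W => F1 W * cW W ^+ N2 + F2 W * cW W ^+ N1), (N1 + N2)%N; split.
    by apply: pf_add; apply: pf_mul => //; apply: pf_exp; apply: cW_poly.
  move=> W uW; rewrite H1 // H2 // exprD; ring.
- exists (fun W => F1 W * F2 W), (N1 + N2)%N; split; first exact: pf_mul.
  move=> W uW; rewrite H1 // H2 // exprD; ring.
Qed.

Lemma PUSH (D : wmats K o d) F : polyfun (@coordT K n o d) F ->
  polyfun (@coordA K n o d) (fun X => F (PsiT (D, X))).
Proof.
elim=> [k|[[j [r s]]|b]|f1 f2 _ P1 _ P2|f1 f2 _ P1 _ P2].
- exact: pf_const.
- have PX : polyM (@coordA K n o d) (fun X : repA => X j).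
    by move=> a b; apply: (pf_ext (pf_coord _ (existT _ j (a, b)))).
  exact: (unpi_poly (pM_const _ (D j)) PX).
- exact: pf_const.
- exact: pf_add.
- exact: pf_mul.
Qed.

Lemma cl5 (S : repA -> Prop) : seteq (clU (preU S)) (preU (clA S)).
Proof.
move=> Vt; split.
  case=> uV HV; split => // f Pf Hf.
  have [F [N [PF HF]]] := PULL Pf.
  have : F Vt = 0.
    by apply: HV => // y [uy Sy]; rewrite HF // Hf // mul0r.
  rewrite HF // => /eqP; rewrite mulf_eq0 expf_eq0 (negbTE (cW_neq0 uV)) andbF orbF.
  by move/eqP.
case=> uV HV; split => // F PF HF.
rewrite -(PsiT_Phi uV).
apply: (HV _ (PUSH Vt.2 PF)) => Y SY; apply: HF; split => //.
by rewrite piT_PsiT.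
Qed.

End Glob.

Lemma seteq_sym T (A B : T -> Prop) : seteq A B -> seteq B A.
Proof. by move=> H x; split => /H. Qed.
Lemma seteq_trans T (A B C : T -> Prop) : seteq A B -> seteq B C -> seteq A C.
Proof. by move=> H1 H2 x; split => [/H1/H2|/H2/H1]. Qed.

Section Main.
Variables (K : fieldType) (n : nat) (o : 'I_n -> bool) (d : 'I_n.+1 -> nat).
Local Notation repT := (repT K o d).
Local Notation repA := (repA K o d).

Lemma preU_ext (S1 S2 : repA -> Prop) : seteq S1 S2 -> seteq (preU S1) (preU S2).
Proof. by move=> H x; split => -[u /H]. Qed.
Lemma imgpi_ext (S1 S2 : repT -> Prop) : seteq S1 S2 -> seteq (imgpi S1) (imgpi S2).
Proof. by move=> H x; split => -[y [/H Sy E]]; exists y. Qed.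
Lemma clU_ext (S1 S2 : repT -> Prop) : seteq S1 S2 -> seteq (clU S1) (clU S2).
Proof.
move=> H x; split => -[u Hx]; split => // f Pf Hf; apply: Hx Pf _ => y /H; exact: Hf.
Qed.

Definition one : wmats K o d := fun j => 1%:M.
Lemma one_unit : isGstar one.
Proof. by move=> j; apply: unitmx1. Qed.

Lemma imgpi_preU (S : repA -> Prop) : seteq (imgpi (preU S)) S.
Proof.
move=> X; split; first by case=> Vt [[_ SV] <-].
move=> SX; exists (PsiT (one, X)).
have E : piT (PsiT (one, X)) = X by apply: piT_PsiT; exact: one_unit.
by rewrite E; split => //; split; [move=> j; apply: unitmx1 | rewrite E].
Qed.

End Main.

Theorem theorem5p3 (K : fieldType) (n : nat) (o : 'I_n -> bool)
    (d : 'I_n.+1 -> nat) :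
  (forall X : repA K o d, exists Vt : repT K o d,
      inU Vt /\ seteq (preU (orbitA X)) (orbitT Vt)) /\
  (forall Vt : repT K o d, inU Vt ->
      seteq (imgpi (orbitT Vt)) (orbitA (piT Vt))) /\
  (forall X : repA K o d, seteq (imgpi (preU (orbitA X))) (orbitA X)) /\
  (forall Vt : repT K o d, inU Vt ->
      seteq (preU (imgpi (orbitT Vt))) (orbitT Vt)) /\
  (forall X : repA K o d,
      seteq (clU (preU (orbitA X))) (preU (clA (orbitA X)))) /\
  (forall X : repA K o d,
      seteq (imgpi (preU (clA (orbitA X)))) (clA (orbitA X))) /\
  (forall Vt : repT K o d, inU Vt ->
      seteq (imgpi (clU (orbitT Vt))) (clA (orbitA (piT Vt)))) /\
  (forall Vt : repT K o d, inU Vt ->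
      seteq (preU (imgpi (clU (orbitT Vt)))) (clU (orbitT Vt))) /\
  (forall X : repA K o d,
      var_iso coordT coordP (clU (preU (orbitA X))) (GstarX (clA (orbitA X)))).
Proof.
have H2 (Vt : repT K o d) : inU Vt -> seteq (imgpi (orbitT Vt)) (orbitA (piT Vt)).
  move=> uV; apply: seteq_trans (imgpi_preU _); exact: imgpi_ext (ORB uV).
have H7 (Vt : repT K o d) : inU Vt ->
    seteq (imgpi (clU (orbitT Vt))) (clA (orbitA (piT Vt))).
  move=> uV; apply: seteq_trans (imgpi_preU _); apply: imgpi_ext.
  exact: seteq_trans (clU_ext (ORB uV)) (cl5 _).
split.
  move=> X; have uP : inU (PsiT (one K o d, X)) by move=> j; apply: unitmx1.
  exists (PsiT (one K o d, X)); split => //.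
  apply: seteq_sym; have := ORB uP.
  by rewrite piT_PsiT //; apply: one_unit.
split; first exact: H2.
split; first by move=> X; apply: imgpi_preU.
split.
  move=> Vt uV; apply: seteq_trans (preU_ext (H2 _ uV)) _; exact: seteq_sym (ORB uV).
split; first by move=> X; apply: cl5.
split; first by move=> X; apply: imgpi_preU.
split; first exact: H7.
split.
  move=> Vt uV; apply: seteq_trans (preU_ext (H7 _ uV)) _.
  apply: seteq_trans (seteq_sym (cl5 _)) _; apply: clU_ext; exact: seteq_sym (ORB uV).
move=> X.
exists (fun Vt : repT K o d => (Vt.2, piT Vt)), (@PsiT K n o d); split.
- by move=> x /cl5 [ux Cx]; split.
- case=> D Y [uD CY]; apply/cl5; split => //=; by rewrite piT_PsiT.
- by move=> x [ux _]; apply: PsiT_Phi.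
- by case=> D Y [uD _] /=; rewrite piT_PsiT.
split.
- move=> x [ux _] [b|a].
    exists (coordT (inr b)), (fun _ => 1); split => //; first exact: pf_coord.
      exact: pf_const.
      exact: oner_neq0.
    by move=> y _ _; rewrite mulr1.
  have [F [PF HF]] := @coord_pull K n o d a.
  exists F, (@cW K n o d); split => //; first exact: cW_poly.
    exact: cW_neq0.
  by move=> y [uy _] _; apply: HF.
- move=> p _ [[j [r s]]|b].
    have PD : polyM (@coordP K n o d) (fun p : (wmats K o d * repA K o d)%type => p.1 j).
      by move=> a b; apply: (pf_ext (pf_coord _ (inl (existT _ j (a, b))))).
    have PV : polyM (@coordP K n o d) (fun p : (wmats K o d * repA K o d)%type => p.2 j).
      by move=> a b; apply: (pf_ext (pf_coord _ (inr (existT _ j (a, b))))).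
    exists (fun p => unpi j (p.1 j) (p.2 j) r s), (fun _ => 1); split => //.
      exact: (unpi_poly PD PV).
      exact: pf_const.
      exact: oner_neq0.
    by move=> y _ _; rewrite mulr1.
  exists (coordP (inl b)), (fun _ => 1); split => //; first exact: pf_coord.
    exact: pf_const.
    exact: oner_neq0.
  by move=> y _ _; rewrite mulr1.
Qed.
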